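(* Let $p,q,s$ be complex numbers with $p\neq 0$, $q\neq 0$, $s^2\neq -1$, and let $A=A(S^4_{p,q,s})$ be the unital complex algebra generated by $\xi,\eta,\zeta,U,V$ subject to the relations $$\zeta\xi=q^2\xi\zeta,\quad \eta\zeta=q^2\zeta\eta,\quad \xi U=pU\xi,\quad V\xi=p\xi V,\quad \eta V=pV\eta,\quad U\eta=p\eta U,$$ $$UV=VU,\quad U\zeta=\zeta U,\quad V\zeta=\zeta V,$$ $$\xi\eta=(\zeta-1)(\zeta+s^2)+UV,\qquad \eta\xi=(q^2\zeta-1)(q^2\zeta+s^2)+UV.$$ Let $e\in \mathrm{Mat}_4(A)$ be $$e=\frac{1}{1+s^2}\begin{pmatrix}1-\zeta&0&U&\xi\\ 0&1-q^2\zeta&-\eta&-pV\\ V&\xi&s^2+\zeta&0\\ -\eta&-p^{-1}U&0&s^2+q^2\zeta\end{pmatrix}.$$ Then $e^2=e$. Moreover, if $q^2$ and $s^2$ are real and $|p|=1$, and $A$ is equipped with the involution determined by $\zeta^*=\zeta$, $\xi^*=-\eta$, $U^*=V$, then $e^*=e$, where $*$ on $\mathrm{Mat}_4(A)$ is the involution of $A$ applied entrywise combined with matrix transposition. *)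

(* Defs.v *)
From HB Require Import structures.
From mathcomp Require Import all_boot all_order all_algebra.
Set Implicit Arguments. Unset Strict Implicit. Unset Printing Implicit Defensive.
Import Order.TTheory GRing.Theory Num.Theory.
Local Open Scope ring_scope.

Definition S4_rels (C : fieldType) (A : algType C) (p q s : C)
    (xi eta zeta U V : A) : Prop :=
  zeta * xi = q ^+ 2 *: (xi * zeta) /\
  eta * zeta = q ^+ 2 *: (zeta * eta) /\
  xi * U = p *: (U * xi) /\
  V * xi = p *: (xi * V) /\
  eta * V = p *: (V * eta) /\
  U * eta = p *: (eta * U) /\
  U * V = V * U /\
  U * zeta = zeta * U /\
  V * zeta = zeta * V /\
  xi * eta = (zeta - 1) * (zeta + (s ^+ 2)%:A) + U * V /\
  eta * xi = (q ^+ 2 *: zeta - 1) * (q ^+ 2 *: zeta + (s ^+ 2)%:A) + U * V.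

Definition e_mx (C : fieldType) (A : algType C) (p q s : C)
    (xi eta zeta U V : A) : 'M[A]_4 :=
  \matrix_(i < 4, j < 4) ((1 + s ^+ 2)^-1 *:
    nth 0 (nth [::]
      [:: [:: 1 - zeta; 0; U; xi];
          [:: 0; 1 - q ^+ 2 *: zeta; - eta; - (p *: V)];
          [:: V; xi; (s ^+ 2)%:A + zeta; 0];
          [:: - eta; - (p^-1 *: U); 0; (s ^+ 2)%:A + q ^+ 2 *: zeta]] i) j).

Definition is_star (C : numClosedFieldType) (A : algType C) (st : A -> A) : Prop :=
  [/\ forall x y, st (x + y) = st x + st y,
      forall (a : C) x, st (a *: x) = a^* *: st x,
      forall x y, st (x * y) = st y * st x &
      forall x, st (st x) = x].

Definition mx_star (A : ringType) (st : A -> A) (m : 'M[A]_4) : 'M[A]_4 :=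
  \matrix_(i < 4, j < 4) st (m j i).

(* Main.v *)
Require Import Defs.
From HB Require Import structures.
From mathcomp Require Import all_boot all_order all_algebra.
Import Order.TTheory GRing.Theory Num.Theory.

Local Open Scope ring_scope.

Lemma alg1D (C : fieldType) (A : algType C) (a : C) : 1 + a%:A = (1 + a)%:A :> A.
Proof. by rewrite scalerDl scale1r. Qed.

Lemma L1 (C : fieldType) (A : algType C) (S : C) (x y1 y2 : A) :
  y1 * x = x * y2 -> (1 - y1) * x + x * (S%:A + y2) = (1 + S) *: x.
Proof.
move=> h; rewrite mulrBl mul1r mulrDr mulr_algr h (addrC (S *: x)) addrA subrK.
by rewrite scalerDl scale1r.
Qed.

Lemma L2 (C : fieldType) (A : algType C) (S : C) (x y1 y2 : A) :
  x * y1 = y2 * x -> x * (1 - y1) + (S%:A + y2) * x = (1 + S) *: x.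
Proof.
move=> h; rewrite mulrBr mulr1 mulrDl mulr_algl h (addrC (S *: x)) addrA subrK.
by rewrite scalerDl scale1r.
Qed.

Lemma L3 (C : fieldType) (A : algType C) (S : C) (y : A) :
  (1 - y) * (1 - y) - (y - 1) * (y + S%:A) = (1 + S) *: (1 - y).
Proof. by rewrite -mulNr opprB -mulrDr addrA subrK alg1D mulr_algr. Qed.

Lemma L4 (C : fieldType) (A : algType C) (S : C) (y : A) :
  (S%:A + y) * (S%:A + y) - (y - 1) * (y + S%:A) = (1 + S) *: (S%:A + y).
Proof.
rewrite -mulNr opprB (addrC y) -mulrDl -addrA (addrCA y) subrr addr0 addrC.
by rewrite alg1D mulr_algl.
Qed.
Definition Mf (C : fieldType) (A : algType C) (p q s : C)
    (xi eta zeta U V : A) (i j : nat) : A :=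
    nth 0 (nth [::]
      [:: [:: 1 - zeta; 0; U; xi];
          [:: 0; 1 - q ^+ 2 *: zeta; - eta; - (p *: V)];
          [:: V; xi; (s ^+ 2)%:A + zeta; 0];
          [:: - eta; - (p^-1 *: U); 0; (s ^+ 2)%:A + q ^+ 2 *: zeta]] i) j.

Arguments Mf {C A}.

Lemma entries (C : fieldType) (A : algType C) (p q s : C)
    (xi eta zeta U V : A) (i j : 'I_4) :
  p != 0 -> S4_rels p q s xi eta zeta U V ->
  \sum_(k < 4) Mf p q s xi eta zeta U V i k * Mf p q s xi eta zeta U V k j
  = (1 + s ^+ 2) *: Mf p q s xi eta zeta U V i j.
Proof.
move=> p0 [r1 [r2 [r3 [r4 [r5 [r6 [r7 [r8 [r9 [r10 r11]]]]]]]]]].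
rewrite !big_ord_recl big_ord0 addr0 /Mf.
case: i => [[|[|[|[|?]]]] //= _]; case: j => [[|[|[|[|?]]]] //= _].
all: rewrite ?(mul0r, mulr0, add0r, addr0).
- by rewrite mulrN r10 opprD (addrCA (U * V)) subrr addr0 L3.
- by rewrite scaler0 mulrN -scalerAr r3 scalerA mulVf // scale1r subrr.
- by rewrite L1.
- by rewrite L1 // r1 -scalerAr.
- by rewrite scaler0 mulrNN -scalerAl -r5 mulNr addNr.
- rewrite mulrNN -scalerAl -scalerAr scalerA mulfV // scale1r -r7 mulNr r11.
  by rewrite opprD subrK L3.
- rewrite mulrN mulNr -opprD scalerN; congr (- _).
  by rewrite L1 // r2 scalerAl.
- rewrite mulrN mulNr -opprD scalerN; congr (- _).
  rewrite L1 // -!scalerAl -!scalerAr r9 !scalerA mulrC //.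
- by rewrite L2.
- by rewrite L2 // -scalerAr r1.
- by rewrite mulrN r10 opprD -r7 (addrCA (U * V)) addrA subrK addrC L4.
- by rewrite scaler0 mulrN -scalerAr -r4 subrr.
- rewrite mulNr mulrN -opprD scalerN; congr (- _).
  by rewrite L2 // r2 scalerAl.
- rewrite mulNr mulrN -opprD scalerN; congr (- _).
  rewrite L2 // -!scalerAl -!scalerAr r8 !scalerA mulrC //.
- by rewrite scaler0 mulrNN -scalerAl r6 scalerA mulVf // scale1r mulNr addNr.
- rewrite mulrNN -scalerAl -scalerAr scalerA mulVf // scale1r mulNr r11.
  by rewrite opprD addrA subrK addrC L4.
Qed.

Theorem mainTheorem1 (C : numClosedFieldType) (A : algType C) (p q s : C)
    (xi eta zeta U V : A) :
  p != 0 -> q != 0 -> s ^+ 2 != -1 ->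
  S4_rels p q s xi eta zeta U V ->
  e_mx p q s xi eta zeta U V *m e_mx p q s xi eta zeta U V
    = e_mx p q s xi eta zeta U V /\
  (q ^+ 2 \is Num.real -> s ^+ 2 \is Num.real -> `|p| = 1 ->
   forall st : A -> A, is_star st ->
   st zeta = zeta -> st xi = - eta -> st U = V ->
   mx_star st (e_mx p q s xi eta zeta U V) = e_mx p q s xi eta zeta U V).
Proof.
move=> p0 q0 hs rels.
have hS : 1 + s ^+ 2 != 0 by rewrite addrC addr_eq0.
split.
  apply/matrixP => i j; rewrite !mxE.
  under eq_bigr => k _ do rewrite !mxE -scalerAl -scalerAr scalerA.
  rewrite -scaler_sumr.
  have := @entries _ _ _ _ _ _ _ _ _ _ i j p0 rels; rewrite /Mf => ->.
  by rewrite scalerA -mulrA mulVf // mulr1.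
move=> hq hsr hp st [sD sZ sM sK] sz sx sU.
have s0 : st 0 = 0.
  by apply: (addrI (st 0)); rewrite addr0 -sD addr0.
have sN x : st (- x) = - st x.
  by apply/eqP; rewrite -addr_eq0 -sD addNr s0.
have s1 : st 1 = 1.
  by have := sM (st 1) 1; rewrite mulr1 sK mulr1 => <-.
have sA (a : C) : st (a%:A) = (a^*)%:A by rewrite sZ s1.
have se : st eta = - xi by rewrite -[eta]opprK -sx sN sK.
have sV : st V = U by rewrite -sU sK.
have cp : p^* = p^-1 by rewrite invC_norm hp expr1n invr1 mul1r.
have cpi : (p^-1)^* = p by rewrite -cp conjCK.
have cQ : (q ^+ 2)^* = q ^+ 2 by apply: conj_Creal.
have cS : (s ^+ 2)^* = s ^+ 2 by apply: conj_Creal.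
have cc : ((1 + s ^+ 2)^-1)^* = (1 + s ^+ 2)^-1.
  by apply: conj_Creal; rewrite realV realD ?real1.
apply/matrixP => i j; rewrite !mxE.
case: i => [[|[|[|[|?]]]] //= _]; case: j => [[|[|[|[|?]]]] //= _].
all: rewrite sZ cc; congr (_ *: _).
all: by rewrite ?(sD, sN, sZ, s0, s1, sA, sz, sx, se, sU, sV, cp, cpi, cQ, cS, opprK).
Qed.
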